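(* Let $H=(V,f)$ be a separated labeled hypergraph with connected 1-skeleton. Suppose $H$ is 2-solvable (modulo some prime $p$), and that, for the corresponding red/blue 2-coloring, $H$ has a simple edge containing a different number of red vertices than blue vertices. Then $\mathcal A[H]\neq k[H]$.
   Context: Let $k$ be a field and $S=k[x_1,\dots,x_n,y]$. For an integral convex polytope $\mathcal P\subseteq\mathbb R^n_{\ge 0}$, the Ehrhart ring $\mathcal A[\mathcal P]$ is the $k$-subspace of $S$ spanned by the monomials $x^{\mathbf a}y^t$ with $t\in\mathbb N$, $\mathbf a\in t\mathcal P\cap\mathbb Z^n$; the polytopal ring is $k[\mathcal P]=k[x^{\mathbf a}y:\mathbf a\in\mathcal P\cap\mathbb Z^n]$. A labeled hypergraph $H=(V,f)$ on a finite set $V$ with alphabet $\{x_1,\dots,x_n\}$ is a function $f:\{x_1,\dots,x_n\}\to\mathcal P(V)$; its edges are the nonempty sets in the image of $f$. $H$ is separated if for all distinct $v,w\in V$ there are edges $F,G$ with $v\in F\setminus G$, $w\in G\setminus F$. For separated $H$, let $x^{\mathbf a_v}=\prod_{x:\,v\in f(x)}x$ for $v\in V$, $\mathcal P_H=\mathrm{conv}\{\mathbf a_v:v\in V\}$, $\mathcal A[H]=\mathcal A[\mathcal P_H]$, $k[H]=k[\mathcal P_H]$. An edge is simple if no other edge of $H$ is a proper subset of it. The 1-skeleton of $H$ is the simple graph on $V$ whose edges are the edges of $H$ with exactly two vertices. For a prime $p$, $H$ is 2-solvable modulo $p$ if there is a proper 2-coloring of the 1-skeleton of $H$ by colors red and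 blue (adjacent vertices get different colors, every vertex of $V$ colored) such that for every edge $E$ of $H$, and also for $E=V$, the numbers $r_E$ and $b_E$ of red and blue vertices in $E$ satisfy $r_E-b_E\equiv 0\pmod p$. $H$ is 2-solvable if it is 2-solvable modulo some prime $p$. *)

(* Defs.v *)
From HB Require Import structures.
From mathcomp Require Import all_boot all_order all_algebra.
Set Implicit Arguments. Unset Strict Implicit. Unset Printing Implicit Defensive.
Import Order.TTheory GRing.Theory Num.Theory.

(* Exponent of a monomial x^a y^t in S = k[x_1..x_n, y]: the pair (a, t). *)
Definition expo (n : nat) : eqType := (n.-tuple nat * nat)%type.

Definition tsum (n : nat) (s : seq (n.-tuple nat)) : n.-tuple nat :=
  [tuple \sum_(b <- s) tnth b i | i < n].

(* a \in t * conv(pts), for pts : I -> N^n (I a finite index type).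
   Convex combinations are taken with rational coefficients (the points are
   integral, so this is the same as with real coefficients). *)
Definition in_dilate (n : nat) (I : finType) (pts : I -> n.-tuple nat)
    (t : nat) (a : n.-tuple nat) : Prop :=
  exists lam : I -> rat,
    (forall v, (0 <= lam v)%R) /\
    (\sum_(v : I) lam v)%R = (t%:R)%R /\
    forall i : 'I_n, ((tnth a i)%:R : rat) = (\sum_(v : I) lam v * (tnth (pts v) i)%:R)%R.

Definition lattice_pt (n : nat) (I : finType) (pts : I -> n.-tuple nat)
    (b : n.-tuple nat) : Prop := in_dilate pts 1 b.

(* Monomials of the Ehrhart ring A[P]: x^a y^t with a in tP ∩ Z^n. *)
Definition ehrhart_mon (n : nat) (I : finType) (pts : I -> n.-tuple nat)
    (e : expo n) : Prop := in_dilate pts e.2 e.1.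

(* Monomials of k[P]: products of t generators x^b y, b in P ∩ Z^n. *)
Definition polytopal_mon (n : nat) (I : finType) (pts : I -> n.-tuple nat)
    (e : expo n) : Prop :=
  exists s : seq (n.-tuple nat),
    size s = e.2 /\ (forall b, b \in s -> lattice_pt pts b) /\ tsum s = e.1.

(* Elements of S = k[x_1..x_n,y]: finitely supported coefficient functions
   on exponents. *)
Definition fin_supp (k : fieldType) (n : nat) (F : expo n -> k) : Prop :=
  exists s : seq (expo n), forall e, F e != 0%R -> e \in s.

Definition mon_span (k : fieldType) (n : nat) (M : expo n -> Prop)
    (F : expo n -> k) : Prop :=
  fin_supp F /\ forall e, F e != 0%R -> M e.

(* A[P] and k[P] as subsets of S.  k[P] is the k-subalgebra generated by the
   x^b y (b in P ∩ Z^n), i.e. the k-span of all products of these generators. *)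
Definition ehrhart_ring (k : fieldType) (n : nat) (I : finType)
    (pts : I -> n.-tuple nat) : (expo n -> k) -> Prop :=
  @mon_span k n (ehrhart_mon pts).
Definition polytopal_ring (k : fieldType) (n : nat) (I : finType)
    (pts : I -> n.-tuple nat) : (expo n -> k) -> Prop :=
  @mon_span k n (polytopal_mon pts).

(* H = (V, f) with V : finType, alphabet {x_1..x_n} = 'I_n, f : 'I_n -> {set V}. *)

Definition is_edge (V : finType) (n : nat) (f : 'I_n -> {set V}) (E : {set V}) : Prop :=
  E != set0 /\ exists x : 'I_n, f x = E.

Definition separated (V : finType) (n : nat) (f : 'I_n -> {set V}) : Prop :=
  forall v w : V, v != w ->
    exists F G, is_edge f F /\ is_edge f G /\
      v \in F /\ v \notin G /\ w \in G /\ w \notin F.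

Definition avec (V : finType) (n : nat) (f : 'I_n -> {set V}) (v : V) : n.-tuple nat :=
  [tuple nat_of_bool (v \in f i) | i < n].

Definition A_H (k : fieldType) (V : finType) (n : nat) (f : 'I_n -> {set V}) :=
  @ehrhart_ring k n V (avec f).
Definition k_H (k : fieldType) (V : finType) (n : nat) (f : 'I_n -> {set V}) :=
  @polytopal_ring k n V (avec f).

Definition simple_edge (V : finType) (n : nat) (f : 'I_n -> {set V}) (E : {set V}) : Prop :=
  is_edge f E /\ forall G, is_edge f G -> ~ (G \proper E).

Definition skel_adj (V : finType) (n : nat) (f : 'I_n -> {set V}) (v w : V) : Prop :=
  v != w /\ is_edge f [set v; w].

Inductive skel_reach (V : finType) (n : nat) (f : 'I_n -> {set V}) : V -> V -> Prop :=
  | sr_refl v : skel_reach f v v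
  | sr_step u v w : skel_adj f u v -> skel_reach f v w -> skel_reach f u w.

Definition skel_connected (V : finType) (n : nat) (f : 'I_n -> {set V}) : Prop :=
  forall v w : V, skel_reach f v w.

(* colouring: col v = true means red, false means blue *)
Definition reds (V : finType) (col : V -> bool) (E : {set V}) : nat :=
  #|[set v in E | col v]|.
Definition blues (V : finType) (col : V -> bool) (E : {set V}) : nat :=
  #|[set v in E | ~~ col v]|.

Definition two_solution (V : finType) (n : nat) (f : 'I_n -> {set V})
    (p : nat) (col : V -> bool) : Prop :=
  (forall v w, skel_adj f v w -> col v != col w) /\
  (forall E, is_edge f E -> reds col E = blues col E %[mod p]) /\
  reds col [set: V] = blues col [set: V] %[mod p].

(* Main.v *)
Require Import Defs.
From HB Require Import structures.
From mathcomp Require Import all_boot all_order all_algebra.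
From mathcomp Require Import zify ring.
Import Order.TTheory GRing.Theory Num.Theory.

Lemma arith q m0 same diff R B S :
  S = m0 * same + (2 - m0) * diff -> (2 < m0 -> diff = 0) -> 0 < same ->
  ((R = same /\ B = diff) \/ (R = diff /\ B = same)) ->
  S * q.+2 = q.+3 * R + q.+1 * B -> R = B.
Proof.
move=> -> Hd Hs HRB.
case: m0 Hd => [|[|[|m0]]] Hd.
- case: HRB => [[-> ->]|[-> ->]] => H; nia.
- case: HRB => [[-> ->]|[-> ->]] => H; nia.
- case: HRB => [[-> ->]|[-> ->]] => H; nia.
- rewrite Hd // in HRB *. case: HRB => [[-> ->]|[-> ->]] => H; nia.
Qed.

Lemma sum_pair (V : finType) (F : V -> nat) v w :
  v != w -> \sum_(x in [set v; w]) F x = F v + F w.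
Proof. by move=> nvw; rewrite big_setU1 ?big_set1 // in_set1. Qed.

Lemma reds_sum (V : finType) (col : V -> bool) (A : {set V}) :
  reds col A = \sum_(x in A) (col x : nat).
Proof.
rewrite /reds -sum1_card big_mkcond [RHS]big_mkcond /=.
by apply: eq_bigr => x _; rewrite inE; case: (x \in A); case: (col x).
Qed.

Lemma blues_sum (V : finType) (col : V -> bool) (A : {set V}) :
  blues col A = \sum_(x in A) (~~ col x : nat).
Proof.
rewrite /blues -sum1_card big_mkcond [RHS]big_mkcond /=.
by apply: eq_bigr => x _; rewrite inE; case: (x \in A); case: (col x).
Qed.

Lemma ind_sum (V : finType) (A : {set V}) (u : V) :
  \sum_(x in A) ((u == x) : nat) = (u \in A).
Proof.
case: (boolP (u \in A)) => Hu.
  rewrite (bigD1 u) //= eqxx big1 ?addn0 // => x /andP[_ Hx].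
  by rewrite eq_sym (negbTE Hx).
rewrite big1 // => x Hx; case: eqP => // E; subst.
by rewrite Hx in Hu.
Qed.

Lemma count_sum (V : finType) (us : seq V) (A : {set V}) :
  \sum_(u <- us) ((u \in A) : nat) = \sum_(x in A) \sum_(u <- us) ((u == x) : nat).
Proof.
rewrite [RHS]exchange_big; apply: eq_bigr => u _; by rewrite ind_sum.
Qed.

Lemma lattice (V : finType) (n : nat) (f : 'I_n -> {set V}) b :
  lattice_pt (avec f) b -> exists u, b = avec f u.
Proof.
move=> [lam [H0 [H1 H2]]]; rewrite mulr1n in H1.
have [u Hu] : exists u, (0 < lam u)%R.
  case: (pickP (fun u => (0 < lam u)%R)) => [u Hu|Hn]; first by exists u.
  exfalso; move: H1; rewrite big1 => [/eqP|v _]; first by rewrite eq_sym oner_eq0.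
  by apply/eqP; rewrite eq_le H0 andbT leNgt Hn.
exists u; apply: eq_from_tnth => i.
rewrite tnth_mktuple.
have Hi := H2 i.
set S1 := (\sum_v lam v * (tnth (avec f v) i)%:R)%R in Hi.
set S2 := (\sum_v lam v * (~~ (v \in f i) : nat)%:R)%R.
have HS : (S1 + S2 = 1)%R.
  rewrite -H1 /S1 /S2 -big_split /=; apply: eq_bigr => v _.
  by rewrite tnth_mktuple; case: (v \in f i); rewrite /= ?mulr1 ?mulr0 ?addr0 ?add0r.
have S1ge : (0 <= S1)%R by apply: sumr_ge0 => v _; apply: mulr_ge0.
have S2ge : (0 <= S2)%R by apply: sumr_ge0 => v _; apply: mulr_ge0.
case: (boolP (u \in f i)) => Hui /=.
  have : (lam u <= S1)%R.
    rewrite /S1 (bigD1 u) //= tnth_mktuple Hui /= mulr1 lerDl.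
    by apply: sumr_ge0 => v _; apply: mulr_ge0.
  move=> Hl.
  have : (0 < (tnth b i)%:R :> rat)%R by rewrite Hi; apply: lt_le_trans Hl.
  have : ((tnth b i)%:R <= 1 :> rat)%R by rewrite Hi -HS lerDl.
  rewrite lern1 ltr0n. lia.
have : (lam u <= S2)%R.
  rewrite /S2 (bigD1 u) //= Hui /= mulr1 lerDl.
  by apply: sumr_ge0 => v _; apply: mulr_ge0.
move=> Hl.
have : ((tnth b i)%:R < 1 :> rat)%R.
  rewrite Hi -HS -[X in (X < _)%R]addr0 ltrD2l; exact: lt_le_trans Hl.
rewrite ltrn1. lia.
Qed.

Lemma lift (V : finType) (n : nat) (f : 'I_n -> {set V}) (s : seq (n.-tuple nat)) :
  (forall b, b \in s -> exists u, b = avec f u) -> exists us, s = map (avec f) us.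
Proof.
elim: s => [|b s IH] H; first by exists [::].
have [u ->] := H b (mem_head _ _).
have [us ->] : exists us, s = map (avec f) us.
  by apply: IH => c Hc; apply: H; rewrite inE Hc orbT.
by exists (u :: us).
Qed.

Definition lam {V : finType} (col : V -> bool) (q : nat) (v : V) : rat :=
  (if col v then (q.+3)%:R / (q.+2)%:R else (q.+1)%:R / (q.+2)%:R)%R.

Lemma aux (x y z : rat) (R B : nat) :
  (x / z *+ R + y / z *+ B = (x * R%:R + y * B%:R) / z)%R.
Proof.
rewrite -[(x / z *+ R)%R]mulr_natr -[(y / z *+ B)%R]mulr_natr mulrDl.
by rewrite [(x * _ / _)%R]mulrAC [(y * _ / _)%R]mulrAC.
Qed.

Lemma sumlam (V : finType) (col : V -> bool) q (A : {set V}) :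
  (\sum_(v in A) lam col q v = (q.+3 * reds col A + q.+1 * blues col A)%:R / (q.+2)%:R)%R.
Proof.
rewrite (bigID col) /= /lam.
rewrite (eq_bigr (fun _ => (q.+3)%:R / (q.+2)%:R)%R); last by move=> v /andP[_ ->].
rewrite [X in (_ + X)%R](eq_bigr (fun _ => (q.+1)%:R / (q.+2)%:R)%R); last first.
  by move=> v /andP[_ /negbTE ->].
rewrite !sumr_const /reds /blues.
have -> : #|[pred v in A | col v]| = #|[set v in A | col v]|.
  by apply: eq_card => v; rewrite !inE.
have -> : #|[pred v in A | ~~ col v]| = #|[set v in A | ~~ col v]|.
  by apply: eq_card => v; rewrite !inE.
by rewrite aux [in RHS]natrD ![in RHS]natrM.
Qed.

Lemma divX q R B : R = B %[mod q.+2] -> q.+2 %| q.+3 * R + q.+1 * B.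
Proof.
move=> H; apply/dvdnP.
rewrite (divn_eq R q.+2) (divn_eq B q.+2) H.
exists (q.+3 * (R %/ q.+2) + q.+1 * (B %/ q.+2) + 2 * (B %% q.+2)).
move: (R %/ q.+2) (B %/ q.+2) (B %% q.+2) => a b c.
ring.
Qed.

Theorem theorem4p6 (k : fieldType) (V : finType) (n : nat) (f : 'I_n -> {set V})
  (p : nat) (col : V -> bool) :
  separated f ->
  skel_connected f ->
  prime p ->
  two_solution f p col ->
  (exists E, simple_edge f E /\ reds col E <> blues col E) ->
  ~ (forall F : expo n -> k, A_H f F <-> k_H f F).
Proof.
move=> Hsep Hconn Hp [Hadj [Hedge Hall]] [E [[[HE0 [i0 Hi0]] _] HRB]] Hiff.
have [q Hq] : exists q, p = q.+2 by exists p.-2; have := prime_gt1 Hp; lia.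
subst p.
pose X (A : {set V}) := q.+3 * reds col A + q.+1 * blues col A.
have Hdvd : forall i, q.+2 %| X (f i).
  move=> i; case: (eqVneq (f i) set0) => [->|ne].
    by rewrite /X reds_sum blues_sum !big_pred0 ?muln0 // => x; rewrite in_set0.
  apply: divX; apply: Hedge; split => //; by exists i.
have HdT : q.+2 %| X [set: V] by apply: divX.
pose a : n.-tuple nat := [tuple X (f i) %/ q.+2 | i < n].
pose t := X [set: V] %/ q.+2.
pose e : expo n := (a, t).
have He : ehrhart_mon (avec f) e.
  exists (lam col q); split.
    by move=> v; rewrite /lam; case: (col v); apply: divr_ge0; apply: ler0n.
  split.
    rewrite /= /t natf_div // -sumlam; apply: eq_bigl => v; by rewrite inE.
  move=> i; rewrite /= tnth_mktuple natf_div // -sumlam big_mkcond /=.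
  apply: eq_bigr => v _; rewrite tnth_mktuple.
  by case: (v \in f i); rewrite /= ?mulr1 ?mulr0.
pose F := fun e' : expo n => if e' == e then (1%R : k) else 0%R.
have HA : A_H f F.
  split.
    exists [:: e] => e'; rewrite /F /=; case: (e' =P e) => [->|_].
      by rewrite mem_head.
    by rewrite eqxx.
  move=> e'; rewrite /F /=; case: (e' =P e) => [-> _|_]; [exact: He | by rewrite eqxx].
have [_ Hk] := (Hiff F).1 HA.
have [s [_ [Hlat Hts]]] : polytopal_mon (avec f) e.
  by apply: Hk; rewrite /F eqxx oner_neq0.
have [us Hus] : exists us, s = map (avec f) us.
  by apply: lift => b Hb; apply: lattice; exact: Hlat.
pose m := fun x => \sum_(u <- us) ((u == x) : nat).
have Hcoord : forall i, \sum_(x in f i) m x = X (f i) %/ q.+2.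
  move=> i; rewrite -count_sum.
  have := congr1 (fun a => tnth a i) Hts.
  rewrite /= /tsum !tnth_mktuple Hus big_map => <-.
  by apply: eq_bigr => u _; rewrite tnth_mktuple.
have Hm2 : forall v w, skel_adj f v w -> col v != col w /\ m v + m w = 2.
  move=> v w Hvw; have Hc := Hadj v w Hvw; split => //.
  case: Hvw => [nvw [_ [i Hi]]].
  have := Hcoord i; rewrite Hi sum_pair // /X reds_sum blues_sum !sum_pair //.
  move=> ->; move: Hc; case: (col v); case: (col w) => //= _.
    by rewrite (_ : q.+3 * _ + _ = 2 * q.+2) ?mulnK //; lia.
  by rewrite (_ : q.+3 * _ + _ = 2 * q.+2) ?mulnK //; lia.
have Hr : forall v w, skel_reach f v w ->
    (col v == col w -> m v = m w) /\ (col v != col w -> m v + m w = 2).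
  move=> v1 w1 Hvw1; elim: Hvw1 => [x|u x y Hux _ [IH1 IH2]]; first by split => //; rewrite eqxx.
  have [cux mux] := Hm2 u x Hux.
  move: cux IH1 IH2; case: (col u); case: (col x); case: (col y) => //= _ IH1 IH2;
    split => // _; (have := IH1 isT) || (have := IH2 isT); lia.
case/set0Pn: HE0 => v0 Hv0.
pose m0 := m v0.
pose same := \sum_(x in E) ((col x == col v0) : nat).
pose diff := \sum_(x in E) ((col x != col v0) : nat).
have HS : \sum_(x in E) m x = m0 * same + (2 - m0) * diff.
  rewrite /same /diff !big_distrr -big_split /=.
  apply: eq_bigr => x Hx; have [H1 H2] := Hr v0 x (Hconn v0 x).
  case: (boolP (col x == col v0)) => Hc /=.
    by rewrite /m0 H1 1?eq_sym // muln1 muln0 addn0.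
  have /H2 : col v0 != col x by rewrite eq_sym.
  rewrite muln0 muln1 add0n /m0. lia.
have Hd : 2 < m0 -> diff = 0.
  move=> Hlt; rewrite /diff big1 // => x Hx.
  case: (boolP (col x == col v0)) => //= Hc.
  have := (Hr v0 x (Hconn v0 x)).2; rewrite eq_sym Hc => /(_ isT). rewrite /m0 in Hlt. lia.
have Hs : 0 < same by rewrite /same (bigD1 v0) //= eqxx.
have HRB' : (reds col E = same /\ blues col E = diff) \/
            (reds col E = diff /\ blues col E = same).
  rewrite reds_sum blues_sum /same /diff; case: (col v0); [left|right];
    by split; apply: eq_bigr => x _; case: (col x).
have Heq : (\sum_(x in E) m x) * q.+2 = q.+3 * reds col E + q.+1 * blues col E.
  have := Hcoord i0; rewrite Hi0 => ->; rewrite divnK //; rewrite -Hi0; exact: Hdvd.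
apply: HRB; exact: (arith _ _ _ _ _ _ _ HS Hd Hs HRB' Heq).
Qed.
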